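(* Let $p\ge1$ and $m\ge1$ be integers. Let $S=(S_1,S_2,\dots,S_N)$ be a finite sequence of words of length $m$ over $\{0,1\}$, each containing exactly one letter $1$; let $\sigma(b)$ denote the position of the $1$ in $S_b$. Suppose that for every position $s$ and every indices $a_1<a_2<\dots<a_p$ with $\sigma(a_1)=\dots=\sigma(a_p)=s$ there exists an index $b$ with $a_1<b<a_p$ and $\sigma(b)<s$. Then $N\le p^m-1$. *)

(* Defs.v *)
From mathcomp Require Import all_boot.
Set Implicit Arguments. Unset Strict Implicit. Unset Printing Implicit Defensive.

(* A word over {0,1} is a seq bool (true = letter 1). *)
Definition one_hot (w : seq bool) : bool := count id w == 1.

(* Position (0-based) of the letter 1 in the b-th word (0-based) of S. *)
Definition sigma (S : seq (seq bool)) (b : nat) : nat := index true (nth [::] S b).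

(* Main.v *)
Require Import Defs.
From mathcomp Require Import all_boot.
From mathcomp Require Import zify.

Fixpoint Phi (p : nat) (c : nat -> nat) (s n : nat) : nat :=
  if n is n'.+1 then c s * p ^ n' + Phi p c s.+1 n' else 0.

Lemma Phi_lt p c n : forall s, (forall j, s <= j < s + n -> c j < p) ->
  Phi p c s n < p ^ n.
Proof.
elim: n => [|n IH] s Hc /=; first by [].
have H1 := IH s.+1 (fun j Hj => Hc j ltac:(lia)).
have H2 : c s < p by apply: Hc; lia.
rewrite expnS. nia.
Qed.

Lemma Phi_incr p c c' x n : forall s, s <= x < s + n ->
  (forall j, s <= j < x -> c' j = c j) -> c' x = (c x).+1 ->
  (forall j, s <= j < s + n -> c j < p) ->
  Phi p c s n < Phi p c' s n.
Proof.
elim: n => [|n IH] s Hx Heq Hcx Hc /=; first by lia.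
have [Exs|Nxs] := eqVneq x s.
  subst x.
  have H1 := @Phi_lt p c n s.+1 (fun j Hj => Hc j ltac:(lia)).
  rewrite Hcx. nia.
have -> : c' s = c s by apply: Heq; lia.
rewrite ltn_add2l; apply: IH.
- lia.
- move=> j Hj; apply: Heq; lia.
- exact: Hcx.
- move=> j Hj; apply: Hc; lia.
Qed.

Fixpoint cnt (t : nat -> nat) (n s : nat) : nat :=
  if n is n'.+1 then
    (if t n' < s then 0 else if t n' == s then (cnt t n' s).+1 else cnt t n' s)
  else 0.

Lemma sorted_rcons_lt (a : seq nat) n : sorted ltn a -> all (fun i => i < n) a ->
  sorted ltn (rcons a n).
Proof.
case: a => [|x a] //= Hs Ha; rewrite rcons_path Hs /=.
have Ha' : all (fun i => i < n) (x :: a) by []. exact: (allP Ha' _ (mem_last x a)).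
Qed.

Lemma cnt_seq (t : nat -> nat) s n : forall q, q <= cnt t n s ->
  exists a : seq nat, [/\ size a = q, sorted ltn a, all (fun i => i < n) a,
    all (fun i => t i == s) a &
    (0 < q -> forall j, nth 0 a 0 <= j < n -> s <= t j)].
Proof.
elim: n => [|n IH] q /=.
  by rewrite leqn0 => /eqP ->; exists [::].
case: q => [_|q]; first by exists [::].
case: (ltnP (t n) s) => Htn //.
case: (eqVneq (t n) s) => Hts Hq.
- have [a [Hsz Hso Hall Hval Hj]] := IH q Hq.
  exists (rcons a n); split.
  + by rewrite size_rcons Hsz.
  + apply: sorted_rcons_lt => //.
  + rewrite all_rcons ltnSn /=; apply/allP => i Hi.
    by move/allP: Hall => /(_ i Hi); lia.
  + by rewrite all_rcons Hts eqxx.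
  + move=> _ j Hjn; case: (ltnP j n) => Hjn'.
    * case: q Hsz Hj Hjn {Hq} => [|q] Hsz Hj Hjn.
        by move: Hsz => /size0nil Ha; subst a; move: Hjn; rewrite /=; lia.
      apply: Hj => //.
      have Hsz' : 0 < size a by rewrite Hsz.
      move: Hjn; rewrite nth_rcons Hsz'; lia.
    * have -> : j = n by lia.
      by rewrite Hts.
- have [a [Hsz Hso Hall Hval Hj]] := IH q.+1 Hq.
  exists a; split => //.
  + apply/allP => i Hi; by move/allP: Hall => /(_ i Hi); lia.
  + move=> _ j Hjn; case: (ltnP j n) => Hjn'.
    * apply: Hj => //; lia.
    * have -> : j = n by lia.
      exact: Htn.
Qed.

Theorem lemmac (p m : nat) (S : seq (seq bool)) :
  1 <= p -> 1 <= m ->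
  all (fun w => size w == m) S ->
  all one_hot S ->
  (forall (s : nat) (a : seq nat),
      size a = p -> sorted ltn a -> all (fun i => i < size S) a ->
      all (fun i => sigma S i == s) a ->
      exists b, nth 0 a 0 < b < nth 0 a p.-1 /\ sigma S b < s) ->
  size S <= p ^ m - 1.
Proof.
move=> Hp Hm Hsize Hone Hyp.
set t := sigma S.
have Ht : forall i, i < size S -> t i < m.
  move=> i Hi; rewrite /t /sigma.
  have Hw : nth [::] S i \in S by apply: mem_nth.
  move/allP: Hsize => /(_ _ Hw) /eqP <-.
  rewrite index_mem.
  move/allP: Hone => /(_ _ Hw); rewrite /one_hot => /eqP Hc.
  have : has id (nth [::] S i) by rewrite has_count Hc.
  by case/hasP => b Hb Hbt; move: Hbt Hb => ->.
have Hbnd : forall n s, n <= size S -> cnt t n s < p.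
  move=> n s Hn; rewrite ltnNge; apply/negP => Hge.
  have [a [Hsz Hso Hall Hval Hj]] := @cnt_seq t s n p Hge.
  have Hall' : all (fun i => i < size S) a.
    apply/allP => i Hi; move/allP: Hall => /(_ i Hi); lia.
  have [b [Hb1 Hb2]] := Hyp s a Hsz Hso Hall' Hval.
  have Hl : nth 0 a p.-1 < n.
    have : nth 0 a p.-1 \in a by apply: mem_nth; rewrite Hsz; lia.
    by move/allP: Hall => H /H.
  have := Hj Hp b ltac:(lia).
  rewrite -/t in Hb2. lia.
have Hstep : forall n, n <= size S -> n <= Phi p (cnt t n) 0 m.
  elim => [|n IH] Hn //.
  have Hlt : Phi p (cnt t n) 0 m < Phi p (cnt t n.+1) 0 m.
    apply: (@Phi_incr p (cnt t n) (cnt t n.+1) (t n) m 0).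
    - have := Ht n Hn; lia.
    - move=> j Hj /=.
      have -> : (t n < j) = false by apply/negbTE; rewrite -leqNgt; lia.
      have -> : (t n == j) = false by apply/negbTE/eqP; lia.
      by [].
    - by rewrite /= ltnn eqxx.
    - move=> j _; apply: Hbnd; lia.
  have := IH (ltnW Hn); lia.
have H1 := Hstep _ (leqnn (size S)).
have H2 := @Phi_lt p (cnt t (size S)) m 0 (fun j _ => Hbnd _ j (leqnn _)).
lia.
Qed.
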